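(* Let $\mathcal{A}=(Q,\delta,I,F)$ be a complete Büchi automaton with $n=|Q|$ and let $\mathcal{B}_S$ be the automaton produced from $\mathcal{A}$ by Schewe's rank-based complementation construction (described in the context). For $x\in\{\mathit{di},\mathit{de},\mathit{di+de}\}$, let $\mathcal{B}_S^{\mathit{sat},x}$ be the saturated variant $\mathcal{B}_S^{\mathit{sat}}$ (described in the context) in which every occurrence of $Q_2$ is replaced by $Q_2^{x}$, where $Q_2^{\mathit{di}}=Q_2\setminus\{(S,O,f,i)\in Q_2\mid\exists p,q\in S: p\preceq_{\mathit{di}}q\wedge f(p)>f(q)\}$, $Q_2^{\mathit{de}}=Q_2\setminus\{(S,O,f,i)\in Q_2\mid\exists p,q\in S: p\preceq_{\mathit{de}}q\wedge f(p)>\lceil f(q)\rceil\}$, $Q_2^{\mathit{di+de}}=Q_2^{\mathit{di}}\cap Q_2^{\mathit{de}}$, and $\lceil x\rceil$ is the smallest even number $\ge x$. Then $\mathcal{L}(\mathcal{B}_S^{\mathit{sat},\mathit{di}})=\mathcal{L}(\mathcal{B}_S^{\mathit{sat},\mathit{de}})=\mathcal{L}(\mathcal{B}_S^{\mathit{sat},\mathit{di+de}})=\mathcal{L}(\mathcal{B}_S)$.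
   Context: Fix a finite nonempty alphabet $\Sigma$. A Büchi automaton is $\mathcal{A}=(Q,\delta,I,F)$ with $\delta:Q\times\Sigma\to2^Q$, complete if $\delta(q,a)\ne\emptyset$ always; $\delta(P,a)=\bigcup_{p\in P}\delta(p,a)$. A run from $q$ on $\alpha=\alpha_0\alpha_1\cdots$ is $\rho$ with $\rho_0=q$, $\rho_{i+1}\in\delta(\rho_i,\alpha_i)$; accepting if some state of $F$ occurs infinitely often; $\mathcal{L}(\mathcal{A})$ is the set of words with an accepting run from an initial state. Simulations: in the game from $(p_0,r_0)$, in round $i$ Spoiler picks $p_i\xrightarrow{\alpha_i}p_{i+1}$ and Duplicator answers $r_i\xrightarrow{\alpha_i}r_{i+1}$; a Duplicator strategy is a map $\sigma$ with $\sigma(r,p\xrightarrow{a}p')\in\delta(r,a)$ (no lookahead). Duplicator wins the direct game if for all $i$, $p_i\in F\Rightarrow r_i\in F$, and the delayed game if for all $i$, $p_i\in F\Rightarrow\exists k\ge i: r_k\in F$. $p\preceq_{\mathit{di}}r$ (resp. $p\preceq_{\mathit{de}}r$) iff Duplicator has a winning strategy in the direct (resp. delayed) game from $(p,r)$. Schewe's construction. A ranking is $f:Q\to\{0,\dots,2n\}$ with $f(q)$ even for $q\in F$; $\mathrm{rank}(f)=\max_q f(q)$. $f$ is $S$-tight if $\mathrm{rank}(f)=r$ is odd, $\{f(s)\mid s\in S\}\supseteq\{1,3,\dots,r\}$ and $\{f(q)\mid q\notin S\}=\{0\}$; $\mathcal{T}$ is the set of $Q$-tight rankings. $\mathcal{B}_S=(Q',\delta',I',F')$: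 $Q'=Q_1\cup Q_2$, $Q_1=2^Q$, $Q_2=\{(S,O,f,i)\in 2^Q\times2^Q\times\mathcal{T}\times\{0,2,\dots,2n-2\}\mid f \text{ is } S\text{-tight},\ O\subseteq S\cap f^{-1}(i)\}$; $I'=\{I\}$; $\delta'=\delta_1\cup\delta_2\cup\delta_3$ with $\delta_1(S,a)=\{\delta(S,a)\}$; $\delta_2(S,a)=\{(S',\emptyset,f,0)\in Q_2\mid S'=\delta(S,a), f\text{ is } S'\text{-tight}\}$; $(S',O',f',i')\in\delta_3((S,O,f,i),a)$ iff $(S',O',f',i')\in Q_2$, $S'=\delta(S,a)$, $f'(q')\le f(q)$ for all $q\in S,q'\in\delta(q,a)$, $\mathrm{rank}(f)=\mathrm{rank}(f')$, $f'$ is $S'$-tight, and either ($O=\emptyset$, $i'=(i+2)\bmod(\mathrm{rank}(f')+1)$, $O'=f'^{-1}(i')$) or ($O\ne\emptyset$, $i'=i$, $O'=\delta(O,a)\cap f'^{-1}(i)$); $F'=\{\emptyset\}\cup\{(S,\emptyset,f,i)\in Q_2\}$. Saturated variant: with $\mathrm{str}(S)=\{q\in Q\mid\exists s\in S:q\preceq_{\mathit{de}}s\}$, $\mathcal{B}_S^{\mathit{sat}}$ has the same $Q'$, $I'$, $F'$ but transitions $\delta_1^{\mathit{sat}}(S,a)=\{\mathrm{str}(\delta(S,a))\}$; $\delta_2^{\mathit{sat}}(S,a)=\{(S',\emptyset,f,0)\in Q_2\mid S'=\mathrm{str}(\delta(S,a))\}$; $(S',O',f',i')\in\delta_3^{\mathit{sat}}((S,O,f,i),a)$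 iff $(S',O',f',i')\in Q_2$, $S'=\mathrm{str}(\delta(S,a))$, $f'(q')\le f(q)$ for all $q\in S,q'\in\delta(q,a)$, $\mathrm{rank}(f)=\mathrm{rank}(f')$, and either ($O=\emptyset$, $i'=(i+2)\bmod(\mathrm{rank}(f')+1)$, $O'=f'^{-1}(i')$) or ($O\ne\emptyset$, $i'=i$, $O'=\delta(O,a)\cap f'^{-1}(i)$). *)

(* Defs.v *)
From mathcomp Require Import all_boot.
Set Implicit Arguments. Unset Strict Implicit. Unset Printing Implicit Defensive.

Record buchi (Sigma Q : finType) := Buchi {
  delta : Q -> Sigma -> {set Q};
  init  : {set Q};
  fin   : {set Q} }.

Section Defs.
Variables (Sigma Q : finType) (A : buchi Sigma Q).

Definition complete : Prop := forall q a, delta A q a != set0.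

Definition img (P : {set Q}) (a : Sigma) : {set Q} := \bigcup_(p in P) delta A p a.

Definition lang_gen (St : Type) (ini : St -> Prop) (tr : St -> Sigma -> St -> Prop)
  (acc : St -> Prop) (w : nat -> Sigma) : Prop :=
  exists rho : nat -> St, ini (rho 0) /\ (forall i, tr (rho i) (w i) (rho i.+1))
    /\ (forall N, exists k, N <= k /\ acc (rho k)).

Definition lang (w : nat -> Sigma) : Prop :=
  lang_gen (fun q => q \in init A) (fun q a q' => q' \in delta A q a)
           (fun q => q \in fin A) w.

(* Duplicator strategy: sigma r p a p' = answer of Duplicator at r to p -a-> p'. *)
Definition strategy (sigma : Q -> Q -> Sigma -> Q -> Q) : Prop :=
  forall r p a p', p' \in delta A p a -> sigma r p a p' \in delta A r a.

Definition spoiler_path (p0 : Q) (w : nat -> Sigma) (ps : nat -> Q) : Prop :=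
  ps 0 = p0 /\ forall i, ps i.+1 \in delta A (ps i) (w i).

Fixpoint dup (sigma : Q -> Q -> Sigma -> Q -> Q) (r0 : Q) (w : nat -> Sigma)
  (ps : nat -> Q) (i : nat) : Q :=
  match i with
  | 0 => r0
  | k.+1 => sigma (dup sigma r0 w ps k) (ps k) (w k) (ps k.+1)
  end.

Definition sim_di (p r : Q) : Prop :=
  exists sigma, strategy sigma /\
    forall w ps, spoiler_path p w ps ->
      forall i, ps i \in fin A -> dup sigma r w ps i \in fin A.

Definition sim_de (p r : Q) : Prop :=
  exists sigma, strategy sigma /\
    forall w ps, spoiler_path p w ps ->
      forall i, ps i \in fin A -> exists k, i <= k /\ dup sigma r w ps k \in fin A.

Definition nQ := #|Q|.

Definition ranking (f : Q -> nat) : Prop :=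
  (forall q, f q <= 2 * nQ) /\ (forall q, q \in fin A -> ~~ odd (f q)).

Definition rank (f : Q -> nat) : nat := \max_(q : Q) f q.

Definition tight (S : {set Q}) (f : Q -> nat) : Prop :=
  odd (rank f)
  /\ (forall k, odd k -> k <= rank f -> exists2 s, s \in S & f s = k)
  /\ (forall q, q \notin S -> f q = 0).

Definition Q2 (S O : {set Q}) (f : Q -> nat) (i : nat) : Prop :=
  (ranking f /\ tight setT f) /\ tight S f /\ ~~ odd i /\ i + 2 <= 2 * nQ
  /\ O \subset S /\ (forall q, q \in O -> f q = i).

Definition ceil_even (x : nat) : nat := if odd x then x.+1 else x.

Definition Q2_di (S O : {set Q}) (f : Q -> nat) (i : nat) : Prop :=
  Q2 S O f i /\
  ~ (exists p q, [/\ p \in S, q \in S, sim_di p q & f q < f p]).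

Definition Q2_de (S O : {set Q}) (f : Q -> nat) (i : nat) : Prop :=
  Q2 S O f i /\
  ~ (exists p q, [/\ p \in S, q \in S, sim_de p q & ceil_even (f q) < f p]).

Definition Q2_dide (S O : {set Q}) (f : Q -> nat) (i : nat) : Prop :=
  Q2_di S O f i /\ Q2_de S O f i.

(* States: Q_1 = C1 S, Q_2 = C2 S O f i (membership in Q_2 enforced by the
   transition relation / acceptance condition). *)
Inductive cstate := C1 of {set Q} | C2 of {set Q} & {set Q} & (Q -> nat) & nat.

(* post T S' : S' is the successor macrostate computed from T = delta(S,a):
   S' = T for B_S, S' = str(T) for the saturated variants. *)
Definition post_id (T S' : {set Q}) : Prop := S' = T.
Definition post_str (T S' : {set Q}) : Prop :=
  forall q, q \in S' <-> exists2 s, s \in T & sim_de q s.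

Definition ctrans (Q2x : {set Q} -> {set Q} -> (Q -> nat) -> nat -> Prop)
  (post : {set Q} -> {set Q} -> Prop) (s : cstate) (a : Sigma) (s' : cstate) : Prop :=
  match s, s' with
  | C1 X, C1 X' => post (img X a) X'
  | C1 X, C2 X' Y' f' i' =>
      Q2x X' Y' f' i' /\ post (img X a) X' /\ Y' = set0 /\ i' = 0 /\ tight X' f'
  | C2 X Y f i, C2 X' Y' f' i' =>
      Q2x X' Y' f' i' /\ post (img X a) X'
      /\ (forall q q', q \in X -> q' \in delta A q a -> f' q' <= f q)
      /\ rank f = rank f' /\ tight X' f'
      /\ ((Y = set0 /\ i' = (i + 2) %% (rank f' + 1)
            /\ Y' = [set q in X' | f' q == i'])
          \/ (Y != set0 /\ i' = i /\ Y' = img Y a :&: [set q | f' q == i]))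
  | C2 _ _ _ _, C1 _ => False
  end.

Definition cacc (Q2x : {set Q} -> {set Q} -> (Q -> nat) -> nat -> Prop)
  (s : cstate) : Prop :=
  match s with
  | C1 X => X = set0
  | C2 X Y f i => Q2x X Y f i /\ Y = set0
  end.

Definition clang (Q2x : {set Q} -> {set Q} -> (Q -> nat) -> nat -> Prop)
  (post : {set Q} -> {set Q} -> Prop) (w : nat -> Sigma) : Prop :=
  lang_gen (fun s => s = C1 (init A)) (ctrans Q2x post) (cacc Q2x) w.

Definition lang_BS := clang Q2 post_id.
Definition lang_sat_di := clang Q2_di post_str.
Definition lang_sat_de := clang Q2_de post_str.
Definition lang_sat_dide := clang Q2_dide post_str.

End Defs.

(* Main.v *)
Require Import Defs.
From mathcomp Require Import all_boot.
From Stdlib Require Import Classical ClassicalEpsilon Lia.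
From mathcomp Require Import zify.
Set Implicit Arguments. Unset Strict Implicit. Unset Printing Implicit Defensive.

Definition pb (P : Prop) : bool := if excluded_middle_informative P then true else false.
Lemma pbP (P : Prop) : reflect P (pb P).
Proof. rewrite /pb; case: excluded_middle_informative => h; constructor => //. Qed.

Lemma choice_fun (X Y : Type) (P : X -> Y -> Prop) (y0 : Y) :
  exists f : X -> Y, forall x, (exists y, P x y) -> P x (f x).
Proof.
exists (fun x => match excluded_middle_informative (exists y, P x y) with
  | left h => proj1_sig (constructive_indefinite_description _ h)
  | right _ => y0 end).
move=> x hx; case: excluded_middle_informative => // h.
exact: proj2_sig (constructive_indefinite_description _ h).
Qed.

Section Run.
Variables (Sigma Q : finType) (A : buchi Sigma Q) (w : nat -> Sigma).

Definition edge t q q' := q' \in delta A q (w t).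

Definition fpath (P : Q -> nat -> Prop) q k e (pi : nat -> Q) :=
  [/\ k <= e, pi k = q, (forall t, k <= t <= e -> P (pi t) t)
   & (forall t, k <= t < e -> edge t (pi t) (pi t.+1))].

Definition ipath (P : Q -> nat -> Prop) q k (pi : nat -> Q) :=
  pi k = q /\ forall t, k <= t -> P (pi t) t /\ edge t (pi t) (pi t.+1).

Definition infp P q k := exists pi, ipath P q k pi.
Definition reachF P q k := exists e pi, fpath P q k e pi /\ pi e \in fin A.

Definition accf q k := exists pi, ipath (fun _ _ => True) q k pi /\
  forall N, exists t, N <= t /\ pi t \in fin A.
Definition R q k := ~ accf q k.

Fixpoint G j : Q -> nat -> Prop :=
  match j with
  | 0 => R
  | j'.+1 => fun q k => G j' q k /\
      (if odd j' then reachF (G j') q k else infp (G j') q k)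
  end.

Definition prep q k (pi : nat -> Q) := fun t => if t <= k then q else pi t.
Definition catp e (p1 p2 : nat -> Q) := fun t => if t <= e then p1 t else p2 t.

Lemma fpath_cat P q k e e' p1 p2 :
  fpath P q k e p1 -> fpath P (p1 e) e e' p2 -> fpath P q k e' (catp e p1 p2).
Proof.
case=> ke p1k P1 E1 [ee' p2e P2 E2]; split.
- exact: leq_trans ke ee'.
- by rewrite /catp ke.
- move=> t /andP[kt te']; rewrite /catp; case: leqP => te.
    by apply: P1; rewrite kt te.
  by apply: P2; rewrite te' (ltnW te).
- move=> t /andP[kt te']; rewrite /catp; case: (ltngtP t e) => te.
  + apply: E1; by rewrite kt te.
  + by apply: E2; rewrite te' (ltnW te).
  + subst t; rewrite -p2e; apply: E2; by rewrite leqnn.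
Qed.

Lemma fpath_trunc P q k e e' pi : fpath P q k e pi -> k <= e' <= e -> fpath P q k e' pi.
Proof.
case=> ke pk HP HE /andP[ke' e'e]; split => // t /andP[kt te].
  apply: HP; by rewrite kt (leq_trans te e'e).
apply: HE; by rewrite kt (leq_trans te e'e).
Qed.

Lemma fpath_tail P q k e pi t : fpath P q k e pi -> k <= t <= e -> fpath P (pi t) t e pi.
Proof.
case=> ke pk HP HE /andP[kt te]; split => // s /andP[ts se].
  apply: HP; by rewrite se (leq_trans kt ts).
apply: HE; by rewrite se (leq_trans kt ts).
Qed.

Lemma fpath0 P q k : P q k -> fpath P q k k (fun _ => q).
Proof.
move=> h; split => // t /andP[a b].
  by have -> : t = k by apply/eqP; rewrite eqn_leq a b.
by move: (leq_ltn_trans a b); rewrite ltnn.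
Qed.

Lemma ipath_tail P q k pi t : ipath P q k pi -> k <= t -> ipath P (pi t) t pi.
Proof. case=> pk H kt; split => // s ts; apply: H; exact: leq_trans kt ts. Qed.

Lemma ipath_fpath P q k pi e : ipath P q k pi -> k <= e -> fpath P q k e pi.
Proof. case=> pk H ke; split => // t /andP[kt _]; [exact: (H t kt).1 | exact: (H t kt).2]. Qed.

Lemma ipath_cat P q k e p1 p2 :
  fpath P q k e p1 -> ipath P (p1 e) e p2 -> ipath P q k (catp e p1 p2).
Proof.
move=> hf hi; split; first by case: hf => ke pk _ _; rewrite /catp ke.
move=> t kt.
have hf' := fpath_cat hf (ipath_fpath hi (leq_trans (leqnSn e) (leq_maxl _ t.+1))).
have kt1 : k <= t.+1 <= maxn e.+1 t.+1 by rewrite (leq_trans kt) // leq_maxr.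
case: (fpath_trunc hf' kt1) => _ _ HP HE; split; [apply: HP | apply: HE]; by rewrite kt /= ?leqnSn ?ltnSn.
Qed.

Lemma G_dec j q k : G j.+1 q k -> G j q k.
Proof. by case. Qed.

Lemma G_decn j j' q k : j <= j' -> G j' q k -> G j q k.
Proof.
elim: j' => [|j' IH]; first by rewrite leqn0 => /eqP ->.
rewrite leq_eqVlt => /orP[/eqP -> //|]; rewrite ltnS => h /G_dec; exact: IH.
Qed.

Lemma G_R j q k : G j q k -> R q k.
Proof. exact: (@G_decn 0). Qed.

Lemma prep_ipath P q k pi : P q k -> edge k q (pi k.+1) ->
  ipath P (pi k.+1) k.+1 pi -> ipath P q k (prep q k pi).
Proof.
move=> hq he [_ H]; split; first by rewrite /prep leqnn.
move=> t kt; rewrite /prep; case: (ltngtP t k) => tk.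
- by move: (leq_ltn_trans kt tk); rewrite ltnn.
- exact: H.
- by subst t; split.
Qed.

Lemma prep_fpath P q k e pi : P q k -> edge k q (pi k.+1) ->
  fpath P (pi k.+1) k.+1 e pi -> fpath P q k e (prep q k pi).
Proof.
move=> hq he [ke _ HP HE]; split; [exact: ltnW | by rewrite /prep leqnn | |].
- move=> t /andP[kt te]; rewrite /prep; case: (ltngtP t k) => tk.
  + by move: (leq_ltn_trans kt tk); rewrite ltnn.
  + apply: HP; by rewrite tk te.
  + by subst t.
- move=> t /andP[kt te]; rewrite /prep; case: (ltngtP t k) => tk.
  + by move: (leq_ltn_trans kt tk); rewrite ltnn.
  + apply: HE; by rewrite tk te.
  + by subst t.
Qed.

Lemma R_succ q q' k : R q k -> edge k q q' -> R q' k.+1.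
Proof.
move=> hR he [pi [hp hF]]; apply: hR; exists (prep q k pi); split.
  have e := hp.1; apply: prep_ipath => //; by rewrite e.
move=> N; case: (hF (maxn N k.+1)) => t [Nt Ft]; exists t; split.
  exact: leq_trans (leq_maxl _ _) Nt.
by rewrite /prep leqNgt (leq_trans (leq_maxr _ _) Nt).
Qed.

Lemma G_pred j q q' k : R q k -> edge k q q' -> G j q' k.+1 -> G j q k.
Proof.
move=> hR he; elim: j => [|j IH] /=; first by [].
case=> hG hx; split; first exact: IH.
case: (odd j) hx.
- case=> e [pi [fp Fe]]; exists e, (prep q k pi); split.
    have e1 : pi k.+1 = q' by case: fp.
    apply: prep_fpath; [exact: IH | by rewrite e1 | by rewrite e1].
  by case: fp => ke _ _ _; rewrite /prep leqNgt ke.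
- case=> pi hp; exists (prep q k pi).
  have e1 : pi k.+1 = q' by case: hp.
  apply: prep_ipath; [exact: IH | by rewrite e1 | by rewrite e1].
Qed.

Lemma G_F j q k : ~~ odd j -> G j.+1 q k -> q \in fin A -> G j.+2 q k.
Proof.
move=> ej hG hF; split => //; rewrite /= (negbTE ej) /=.
exists k, (fun _ => q); split => //; apply: fpath0; move: hG => /=; by rewrite (negbTE ej).
Qed.

Lemma G_tail j q k pi : ~~ odd j -> ipath (G j) q k pi -> forall t, k <= t -> G j.+1 (pi t) t.
Proof.
move=> ej hp t kt; split; first exact: ((hp.2 t kt).1).
rewrite (negbTE ej); exists pi; exact: ipath_tail hp kt.
Qed.

Lemma G_tail_ipath j q k pi : ~~ odd j -> ipath (G j) q k pi -> ipath (G j.+1) q k pi.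
Proof.
move=> ej hp; split; first by case: hp.
move=> t kt; split; [exact: (G_tail ej hp kt) | exact: (hp.2 t kt).2].
Qed.

Fixpoint csf (seg : Q * nat -> nat * (nat -> Q)) (c0 : Q * nat) t : Q * nat :=
  match t with
  | 0 => c0
  | t'.+1 => if t'.+1 < (seg (csf seg c0 t')).1 then csf seg c0 t'
             else ((seg (csf seg c0 t')).2 (seg (csf seg c0 t')).1, (seg (csf seg c0 t')).1)
  end.

Lemma csfS seg c0 t : csf seg c0 t.+1 =
  if t.+1 < (seg (csf seg c0 t)).1 then csf seg c0 t
  else ((seg (csf seg c0 t)).2 (seg (csf seg c0 t)).1, (seg (csf seg c0 t)).1).
Proof. by []. Qed.
Lemma build_acc (D : Q -> nat -> Prop) :
  (forall u k, D u k -> exists ep : nat * (nat -> Q),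
     [/\ k < ep.1, ep.2 k = u, (forall t, k <= t < ep.1 -> edge t (ep.2 t) (ep.2 t.+1)),
         D (ep.2 ep.1) ep.1 & exists2 t, k <= t < ep.1 & ep.2 t \in fin A]) ->
  forall u k, D u k -> accf u k.
Proof.
move=> Hseg u k Duk.
have [seg Hs] := choice_fun (fun (c : Q * nat) (ep : nat * (nat -> Q)) =>
     [/\ c.2 < ep.1, ep.2 c.2 = c.1, (forall t, c.2 <= t < ep.1 -> edge t (ep.2 t) (ep.2 t.+1)),
         D (ep.2 ep.1) ep.1 & exists2 t, c.2 <= t < ep.1 & ep.2 t \in fin A]) (0, fun _ => u).
have Hs' c : D c.1 c.2 -> [/\ c.2 < (seg c).1, (seg c).2 c.2 = c.1,
     (forall t, c.2 <= t < (seg c).1 -> edge t ((seg c).2 t) ((seg c).2 t.+1)),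
     D ((seg c).2 (seg c).1) (seg c).1 & exists2 t, c.2 <= t < (seg c).1 & (seg c).2 t \in fin A].
  move=> Dc; apply: Hs; exact: Hseg.
pose cs := csf seg (u, k).
have csS t : cs t.+1 = if t.+1 < (seg (cs t)).1 then cs t
  else ((seg (cs t)).2 (seg (cs t)).1, (seg (cs t)).1) by exact: csfS.
have cs0 : cs 0 = (u, k) by [].
clearbody cs.
have inv t : [/\ D (cs t).1 (cs t).2, (cs t).2 <= maxn t k & maxn t k < (seg (cs t)).1].
  elim: t => [|t [D1 l1 l2]]; rewrite ?cs0 ?csS.
    have [h1 _ _ _ _] := Hs' (u,k) Duk; by rewrite max0n.
  case: ifP => h.
  - have mS : maxn t k <= maxn t.+1 k by rewrite geq_max !leq_max leqnSn leqnn orbT.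
    split => //; first exact: leq_trans l1 mS.
    rewrite gtn_max h /=; exact: leq_ltn_trans (leq_maxr _ _) l2.
  - have [h1 h2 h3 h4 h5] := Hs' _ D1.
    have te : t.+1 = (seg (cs t)).1.
      apply/eqP; rewrite eqn_leq; apply/andP; split; [exact: leq_ltn_trans (leq_maxl _ _) l2 | by rewrite leqNgt h].
    have [g1 _ _ _ _] := Hs' (_, _) h4.
    split => //=; first by rewrite -te leq_maxl.
    have kk : k <= (seg (cs t)).1 := ltnW (leq_ltn_trans (leq_maxr _ _) l2).
    apply: leq_ltn_trans g1; by rewrite /= geq_max kk -te leqnn.
have stay T0 c d : cs T0 = c -> T0 + d < (seg c).1 -> cs (T0 + d) = c.
  move=> hc; elim: d => [|d IH]; first by rewrite addn0.
  move=> h; have h' : T0 + d < (seg c).1 by apply: ltn_trans h; rewrite addnS.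
  rewrite addnS csS IH //; rewrite -addnS h //.
have jump T0 c : cs T0 = c -> T0 < (seg c).1 -> cs (seg c).1 = ((seg c).2 (seg c).1, (seg c).1).
  move=> hc h; have := stay T0 c ((seg c).1 - T0).-1 hc.
  have e1 : T0 + ((seg c).1 - T0).-1 < (seg c).1.
    move: h; clear; lia.
  have e2 : (T0 + ((seg c).1 - T0).-1).+1 = (seg c).1.
    move: h; clear; lia.
  move/(_ e1) => h1; rewrite -e2 csS h1 e2 ltnn //.
exists (fun t => (seg (cs t)).2 t); split; last first.
  move=> N; set T := maxn N k.
  have [D1 l1 l2] := inv T.
  have hj := jump T _ (erefl _) (leq_ltn_trans (leq_maxl _ _) l2).
  set e := (seg (cs T)).1 in hj l2.
  have [_ _ _ D2 _] := Hs' _ D1.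
  have [g1 g2 g3 g4 [t2 /andP[et2 t2e] Ft2]] := Hs' (_, _) D2.
  move: et2 t2e Ft2; rewrite /= => et2 t2e Ft2.
  exists t2; split.
    apply: leq_trans (leq_maxl N k) _; apply: leq_trans et2; exact: ltnW (leq_ltn_trans (leq_maxl _ _) l2).
  have := stay e _ (t2 - e) hj; rewrite subnKC // => -> //.
split.
  have [D1 l1 l2] := inv k; rewrite maxnn in l1 l2.
  have : (cs k) = (u, k).
    have := stay 0 (u,k) k cs0; rewrite add0n; apply.
    by have [h1 _ _ _ _] := Hs' (u,k) Duk.
  move=> ->; by have [_ h2 _ _ _] := Hs' (u,k) Duk.
move=> t kt; split => //.
have [D1 l1 l2] := inv t; rewrite (maxn_idPl kt) in l1 l2.
have [h1 h2 h3 h4 h5] := Hs' _ D1.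
rewrite csS; case: ifP => h.
  apply: h3; by rewrite l1.
have te : t.+1 = (seg (cs t)).1.
  apply/eqP; rewrite eqn_leq; apply/andP; split; [exact: l2 | by rewrite leqNgt h].
have [g1 g2 _ _ _] := Hs' (_, _) h4; rewrite /= -te in g2 *.
rewrite g2; apply: h3; rewrite l1 /=; exact: l2.
Qed.

Lemma G_odd_unfold i q k : G (i.*2).+2 q k <-> G (i.*2).+1 q k /\ reachF (G (i.*2).+1) q k.
Proof. by rewrite /= odd_double. Qed.

Lemma G_even_unfold i q k : G (i.*2).+1 q k <-> G (i.*2) q k /\ infp (G (i.*2)) q k.
Proof. by rewrite /= odd_double. Qed.

Lemma Ffree i v k : G (i.*2).+1 v k ->
  exists e pi, fpath (G (i.*2).+1) v k e pi /\ ~ G (i.*2).+2 (pi e) e.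
Proof.
move=> hv; apply: NNPP => H.
have H' : forall e pi, fpath (G (i.*2).+1) v k e pi -> G (i.*2).+2 (pi e) e.
  move=> e pi fp; apply: NNPP => h; apply: H; by exists e, pi.
pose D u k' := exists pi, fpath (G (i.*2).+1) v k k' pi /\ pi k' = u.
have: accf v k.
  apply: (@build_acc D); last by exists (fun _ => v); split => //; apply: fpath0.
  move=> u k' [pv [fpv pvk]].
  have /G_odd_unfold [Gu [e1 [p1 [fp1 F1]]]] : G (i.*2).+2 u k' by rewrite -pvk; exact: H'.
  have Gx : G (i.*2).+1 (p1 e1) e1 by case: fp1 => ke1 _ HP _; apply: HP; rewrite ke1 leqnn.
  have /G_even_unfold [_ [pi2 hp2]] := Gx.
  have hp2' := G_tail_ipath (negbT (odd_double i)) hp2.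
  have fp2 : fpath (G (i.*2).+1) (p1 e1) e1 e1.+1 pi2 := ipath_fpath hp2' (leqnSn _).
  have fseg := fpath_cat fp1 fp2.
  have k'e1 : k' <= e1 by case: fp1.
  exists (e1.+1, catp e1 p1 pi2); split => /=.
  - by rewrite ltnS.
  - by case: fseg.
  - by case: fseg => _ _ _ HE t /andP[a b]; apply: HE; rewrite a b.
  - exists (catp k' pv (catp e1 p1 pi2)); split.
      apply: fpath_cat; first exact: fpv.
      by rewrite pvk.
    by rewrite /catp leqNgt ltnS k'e1 /= ltnn.
  - exists e1; first by rewrite k'e1 leqnn.
    by rewrite /catp leqnn.
by apply: (G_R hv).
Qed.

Definition W j k := [set q | pb (G j q k)].

Lemma width i : exists l, forall k, l <= k -> #|W (i.*2) k| <= #|Q| - i.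
Proof.
elim: i => [|i [l IH]]; first by exists 0 => k _; rewrite subn0 max_card.
case: (classic (exists v k, l <= k /\ G (i.*2).+1 v k)) => [[v [k [lk Gv]]]|hno].
- have [e [pi [fp nG]]] := Ffree Gv.
  have ke : k <= e by case: fp.
  have Gu : G (i.*2).+1 (pi e) e by case: fp => _ _ HP _; apply: HP; rewrite ke leqnn.
  have /G_even_unfold [_ [p2 hp2]] := Gu.
  have hp2' := G_tail_ipath (negbT (odd_double i)) hp2.
  exists e => k' ek'.
  have sub : W (i.+1).*2 k' \proper W (i.*2) k'.
    apply/properP; split.
      apply/subsetP => q; rewrite !inE => /pbP h; apply/pbP; apply: G_decn h.
      by rewrite doubleS ltnW // ltnS leqnSn.
    exists (p2 k'); rewrite !inE.
      by apply/pbP; apply: (hp2.2 k' ek').1.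
    apply/pbP; rewrite doubleS => /G_odd_unfold [_ [e3 [p3 [fp3 F3]]]].
    apply: nG; apply/G_odd_unfold; split => //.
    exists e3, (catp k' p2 p3); split; last first.
      have [k'e3 p3k _ _] := fp3; rewrite /catp; case: (leqP e3 k') => h //.
      have ee : e3 = k' by apply/eqP; rewrite eqn_leq h k'e3.
      by rewrite ee -p3k -ee.
    apply: fpath_cat => //; exact: ipath_fpath hp2' ek'.
  have := proper_card sub; have := IH k' (leq_trans lk (leq_trans ke ek')).
  rewrite subnS; move=> h1 h2; rewrite -ltnS; apply: leq_trans h2 _.
  apply: leq_trans h1 _; exact: leqSpred.
- exists l => k lk; apply: leq_trans (_ : 0 <= _) => //.
  rewrite leqn0 cards_eq0; apply/eqP/setP => q; rewrite !inE.
  apply/pbP => h; apply: hno; exists q, k; split => //.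
  rewrite doubleS in h; exact: G_dec h.
Qed.

Lemma Gbound q k : ~ G (#|Q|.*2).+1 q k.
Proof.
have [l Hl] := width #|Q|.
move/G_even_unfold => [_ [pi hp]].
have := Hl (maxn l k) (leq_maxl _ _); rewrite subnn leqn0 cards_eq0 => /eqP/setP/(_ (pi (maxn l k))).
rewrite !inE; move/pbP; apply; exact: (hp.2 _ (leq_maxr _ _)).1.
Qed.

Lemma G_le2n j q k : G j q k -> j <= #|Q|.*2.
Proof.
move=> h; rewrite leqNgt; apply/negP => hj; apply: (@Gbound q k); exact: G_decn hj h.
Qed.

Definition rk q k := \max_(j < (#|Q|.*2).+1 | pb (G j q k)) j.

Lemma rkP q k j : R q k -> (G j q k <-> j <= rk q k).
Proof.
move=> hR; split.
  move=> h; have hj : j < (#|Q|.*2).+1 by rewrite ltnS; exact: G_le2n h.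
  rewrite /rk; apply: (@leq_bigmax_cond _ _ (fun i : 'I_(#|Q|.*2).+1 => nat_of_ord i) (Ordinal hj)).
  exact/pbP.
have P0 : pb (G (@ord0 (#|Q|.*2)) q k) by apply/pbP.
rewrite /rk (bigmax_eq_arg _ P0).
case: arg_maxnP => // i /pbP Gi _ ji; exact: G_decn ji Gi.
Qed.

Lemma rk_le q k : rk q k <= #|Q|.*2.
Proof.
rewrite /rk; apply/bigmax_leqP => i _; by rewrite -ltnS.
Qed.

Lemma rk_G q k : R q k -> G (rk q k) q k.
Proof. by move=> hR; apply/(rkP _ hR). Qed.

Lemma rk_edge q q' k : R q k -> edge k q q' -> rk q' k.+1 <= rk q k.
Proof.
move=> hR he; have hR' := R_succ hR he.
apply/(rkP _ hR); apply: G_pred hR he _; exact: rk_G.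
Qed.

Lemma rk_F q k : R q k -> q \in fin A -> ~~ odd (rk q k).
Proof.
move=> hR hF; apply/negP => ho.
have hG := rk_G hR.
have e : rk q k = (rk q k).-1.+1 by rewrite prednK // lt0n; apply/negP => /eqP h; rewrite h in ho.
rewrite e in hG ho.
have ev : ~~ odd (rk q k).-1 by rewrite -oddS.
have h2 := G_F ev hG hF.
have := (proj1 (rkP _ hR)) h2; rewrite -e ltnn //.
Qed.

Definition Win (sg : Q -> Q -> Sigma -> Q -> Q) q s :=
  forall w' ps, spoiler_path A q w' ps -> forall i, ps i \in fin A ->
    exists k, i <= k /\ dup sg s w' ps k \in fin A.

Lemma win_step sg q s a q' : strategy A sg -> Win sg q s -> q' \in delta A q a ->
  Win sg q' (sg s q a q').
Proof.
move=> hs hw hq w' ps [p0 hp] i Fi.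
pose w2 := fun t => if t is t'.+1 then w' t' else a.
pose ps2 := fun t => if t is t'.+1 then ps t' else q.
have sp : spoiler_path A q w2 ps2.
  split => // -[|t] /=; [by rewrite p0 | exact: hp].
have rel t : dup sg s w2 ps2 t.+1 = dup sg (sg s q a q') w' ps t.
  elim: t => [|t IH] /=; first by rewrite p0.
  by rewrite -IH.
have [k [ik Fk]] := hw w2 ps2 sp i.+1 Fi.
move: ik Fk; case: k => // k ik; rewrite rel => Fk; exists k; split => //.
Qed.

Fixpoint adup (sg : Q -> Q -> Sigma -> Q -> Q) s k (pi : nat -> Q) t : Q :=
  match t with
  | 0 => s
  | t'.+1 => if t' < k then s else sg (adup sg s k pi t') (pi t') (w t') (pi t'.+1)
  end.

Lemma adup_le sg s k pi t : t <= k -> adup sg s k pi t = s.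
Proof. case: t => //= t h; by rewrite h. Qed.

Lemma adup_S sg s k pi t : k <= t ->
  adup sg s k pi t.+1 = sg (adup sg s k pi t) (pi t) (w t) (pi t.+1).
Proof. by move=> h /=; rewrite ltnNge h. Qed.

Lemma adup_rel sg s k pi t :
  adup sg s k pi (k + t) = dup sg s (fun t => w (k + t)) (fun t => pi (k + t)) t.
Proof.
elim: t => [|t IH]; first by rewrite addn0 adup_le.
by rewrite addnS adup_S ?leq_addr // IH /= addnS.
Qed.

Lemma dup_props sg q s k pi : strategy A sg -> Win sg q s -> pi k = q ->
  (forall t, k <= t -> edge t (pi t) (pi t.+1)) ->
  forall t, k <= t -> Win sg (pi t) (adup sg s k pi t) /\ edge t (adup sg s k pi t) (adup sg s k pi t.+1).
Proof.
move=> hs hw pk he t kt; rewrite -(subnKC kt); elim: (t - k) => [|d [IH1 IH2]].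
  rewrite addn0 adup_le //; split; first by rewrite pk.
  rewrite adup_S // adup_le //; apply: hs; exact: he.
have kd : k <= k + d by rewrite leq_addr.
have e1 : adup sg s k pi (k + d.+1) = sg (adup sg s k pi (k + d)) (pi (k + d)) (w (k + d)) (pi (k + d).+1).
  by rewrite addnS adup_S.
split; first by rewrite e1 addnS; apply: win_step => //; exact: he.
rewrite adup_S ?addnS ?(leq_trans kd) //; apply: hs; rewrite -addnS; apply: he.
exact: leq_addr.
Qed.

Lemma dup_R sg q s k pi : strategy A sg -> Win sg q s -> pi k = q ->
  (forall t, k <= t -> edge t (pi t) (pi t.+1)) -> R s k ->
  forall t, k <= t -> R (adup sg s k pi t) t.
Proof.
move=> hs hw pk he hR t kt; rewrite -(subnKC kt); elim: (t - k) => [|d IH].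
  by rewrite addn0 adup_le.
rewrite addnS; apply: R_succ IH _.
exact: (dup_props hs hw pk he (leq_addr _ _)).2.
Qed.

Lemma dup_F sg q s k pi e : strategy A sg -> Win sg q s -> pi k = q ->
  (forall t, k <= t -> edge t (pi t) (pi t.+1)) -> k <= e -> pi e \in fin A ->
  exists e', e <= e' /\ adup sg s k pi e' \in fin A.
Proof.
move=> hs hw pk he ke Fe.
have sp : spoiler_path A q (fun t => w (k + t)) (fun t => pi (k + t)).
  split; first by rewrite addn0.
  move=> t; rewrite addnS; apply: he; exact: leq_addr.
have := hw _ _ sp (e - k); rewrite subnKC // => /(_ Fe) [k2 [h1 h2]].
exists (k + k2); split; first by rewrite -(subnKC ke) leq_add2l.
by rewrite adup_rel.
Qed.

Lemma G_odd_ipath j q k : odd j -> G j q k -> exists pi, ipath (G j) q k pi.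
Proof.
case: j => // j /= ej [_]; rewrite (negbTE ej) => -[pi hp].
exists pi; move: (G_tail_ipath ej hp); by rewrite /= (negbTE ej).
Qed.

Lemma G_sim j : forall sg q s k, strategy A sg -> Win sg q s -> R s k -> G j q k -> G j s k.
Proof.
elim: j => [|j IH] sg q s k hs hw hR //.
case=> hG hx; split; first exact: (IH sg q s k hs hw hR hG).
have key P : ipath (G j) q k P -> forall t, k <= t ->
    G j (adup sg s k P t) t /\ edge t (adup sg s k P t) (adup sg s k P t.+1).
  move=> hP t kt.
  have he : forall t, k <= t -> edge t (P t) (P t.+1) by move=> t' h; exact: (hP.2 t' h).2.
  have [h1 h2] := dup_props hs hw hP.1 he kt.
  split => //; apply: (IH sg (P t) _ t hs h1); [exact: (dup_R hs hw hP.1 he hR kt) | exact: (hP.2 t kt).1].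
case: (boolP (odd j)) => oj; [rewrite oj in hx * | rewrite (negbTE oj) in hx *].
- case: hx => e [p [fp Fe]].
  have ke : k <= e by case: fp.
  have Ge : G j (p e) e by case: fp => _ _ HP _; apply: HP; rewrite ke leqnn.
  have [pi2 hp2] := G_odd_ipath oj Ge.
  have hP := ipath_cat fp hp2.
  have he : forall t, k <= t -> edge t (catp e p pi2 t) (catp e p pi2 t.+1).
    by move=> t' h; exact: (hP.2 t' h).2.
  have PF : catp e p pi2 e \in fin A by rewrite /catp leqnn.
  have [e' [ee' Fe']] := dup_F hs hw hP.1 he ke PF.
  exists e', (adup sg s k (catp e p pi2)); split => //; split.
  + exact: leq_trans ke ee'.
  + exact: adup_le.
  + move=> t /andP[kt _]; exact: (key _ hP t kt).1.
  + move=> t /andP[kt _]; exact: (key _ hP t kt).2.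
- case: hx => p hp; exists (adup sg s k p); split; first exact: adup_le.
  move=> t kt; exact: key.
Qed.

Lemma R_sim q s k : sim_de A q s -> R s k -> R q k.
Proof.
move=> [sg [hs hw]] hR [pi [hp hF]]; apply: hR.
have he : forall t, k <= t -> edge t (pi t) (pi t.+1) by move=> t h; exact: (hp.2 t h).2.
exists (adup sg s k pi); split.
  split; first exact: adup_le.
  move=> t kt; split => //; exact: (dup_props hs hw hp.1 he kt).2.
move=> N; have [t [Nt Ft]] := hF (maxn N k).
have [e' [te' Fe']] := dup_F hs hw hp.1 he (leq_trans (leq_maxr _ _) Nt) Ft.
exists e'; split => //; exact: leq_trans (leq_maxl _ _) (leq_trans Nt te').
Qed.

Lemma rk_sim q s k : sim_de A q s -> R s k -> rk q k <= rk s k.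
Proof.
move=> hsim hR; have hRq := R_sim hsim hR.
case: hsim => sg [hs hw].
apply/(rkP _ hR); apply: (G_sim hs hw hR); exact: rk_G.
Qed.

Lemma sim_di_de q s : sim_di A q s -> sim_de A q s.
Proof.
move=> [sg [hs hw]]; exists sg; split => // w' ps sp i Fi; exists i; split => //; exact: hw.
Qed.

Lemma sim_refl q : complete A -> sim_de A q q.
Proof.
move=> hc.
exists (fun r p a p' => if p' \in delta A r a then p' else odflt r [pick x in delta A r a]).
split.
  move=> r p a p' _; case: ifP => // _; case: pickP => [x hx //|h].
  by have := hc r a; rewrite (_ : delta A r a = set0) ?eqxx //; apply/setP => x; rewrite inE h.
move=> w' ps [p0 hp] i Fi; exists i; split => //.
suff -> : dup (fun r p a p' => if p' \in delta A r a then p' else odflt r [pick x in delta A r a]) q w' ps i = ps i by [].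
elim: i {Fi} => [|i IH] /=; first by rewrite p0.
by rewrite IH hp.
Qed.

Lemma img_mem (X : {set Q}) a p q : p \in X -> q \in delta A p a -> q \in img A X a.
Proof. move=> pX hq; apply/bigcupP; by exists p. Qed.

Lemma img_sub (X Y : {set Q}) a : X \subset Y -> img A X a \subset img A Y a.
Proof.
move=> /subsetP h; apply/subsetP => q /bigcupP[p pX hq]; apply/bigcupP; exists p => //; exact: h.
Qed.

Lemma cyc_arith a b h : b < h -> exists c, (a.*2 + (c.+1).*2) %% (h.*2) = b.*2.
Proof.
move=> bh; have h0 : 0 < h by exact: leq_ltn_trans (leq0n b) bh.
exists (b + h - a %% h).-1.
have hp : 0 < b + h - a %% h by rewrite subn_gt0 (leq_trans (ltn_pmod _ h0)) // leq_addl.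
rewrite prednK // -doubleD -!mul2n -muln_modr; congr (2 * _).
have e : a + (b + h - a %% h) = (a %/ h).+1 * h + b.
  have := divn_eq a h; have := ltn_pmod a h0; lia.
by rewrite e modnMDl modn_small.
Qed.

Definition getS (c : cstate Q) := match c with C1 X => X | C2 X _ _ _ => X end.
Definition getO (c : cstate Q) := match c with C1 _ => set0 | C2 _ Y _ _ => Y end.
Definition getf (c : cstate Q) := match c with C1 _ => (fun _ => 0) | C2 _ _ f _ => f end.
Definition geti (c : cstate Q) := match c with C1 _ => 0 | C2 _ _ _ i => i end.
Definition isC2 (c : cstate Q) := match c with C1 _ => false | C2 _ _ _ _ => true end.

Lemma ev_const (g : nat -> nat) m : (forall k, m <= k -> g k.+1 <= g k) ->
  exists k1, m <= k1 /\ forall k, k1 <= k -> g k = g k1.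
Proof.
move=> hmono.
have mle : forall m' k, m <= m' -> m' <= k -> g k <= g m'.
  move=> m' k mm' mk; rewrite -(subnKC mk); elim: (k - m') => [|d IH]; first by rewrite addn0.
  rewrite addnS; apply: leq_trans IH; apply: hmono; exact: leq_trans mm' (leq_addr _ _).
suff H : forall b m', m <= m' -> g m' <= b -> exists k1, m' <= k1 /\ forall k, k1 <= k -> g k = g k1.
  exact: (H (g m) m (leqnn m) (leqnn (g m))).
elim=> [|b IH] m' mm' hb.
  exists m'; split => // k mk; apply/eqP; rewrite eqn_leq mle //=; by rewrite (leq_trans hb).
case: (classic (forall k, m' <= k -> g k = g m')) => [h|].
  by exists m'; split.
move=> hn; have [k hk] := not_all_ex_not _ _ hn; have [mk nk] := imply_to_and _ _ hk.
have lt : g k < g m' by rewrite ltn_neqAle mle // andbT; apply/eqP.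
have [k1 [kk1 h]] := IH k (leq_trans mm' mk) (leq_trans (leq_trans lt hb) (leqnn _)).
exists k1; split => //; exact: leq_trans mk kk1.
Qed.

Section Sound.
Variables (Q2x : {set Q} -> {set Q} -> (Q -> nat) -> nat -> Prop) (post : {set Q} -> {set Q} -> Prop).
Hypothesis hQ2 : forall S O f i, Q2x S O f i -> Q2 A S O f i.
Hypothesis hpost : forall T S', post T S' -> T \subset S'.

Lemma sound : clang A Q2x post w -> ~ lang A w.
Proof.
move=> [rho [r0 [htr hacc]]] [r [ri [hr hF]]].
have rin k : r k \in getS (rho k).
  elim: k => [|k IH]; first by rewrite r0.
  have := htr k; have hk := img_mem IH (hr k).
  case: (rho k) IH hk => [X|X Y f i] /= IH hk; case: (rho k.+1) => [X'|X' Y' f' i'] //=.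
  - by move=> /hpost /subsetP; apply.
  - by case=> _ [/hpost /subsetP h _]; apply: h.
  - by case=> _ [/hpost /subsetP h _]; apply: h.
have [m0 [_ acc0]] := hacc 0.
have c2m0 : isC2 (rho m0).
  move: acc0 (rin m0); case: (rho m0) => //= X -> ; by rewrite inE.
have c2 k : m0 <= k -> isC2 (rho k).
  move=> mk; rewrite -(subnKC mk); elim: (k - m0) => [|d IH]; first by rewrite addn0.
  move: (htr (m0 + d)); rewrite addnS; case: (rho (m0 + d)) IH => //= ? ? ? ? _.
  by case: (rho (m0 + d).+1).
pose S k := getS (rho k). pose O k := getO (rho k). pose f k := getf (rho k). pose i k := geti (rho k).
have eqC2 k : m0 <= k -> rho k = C2 (S k) (O k) (f k) (i k).
  by move=> /c2; rewrite /S /O /f /i; case: (rho k).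
have tr k : m0 <= k ->
  [/\ Q2x (S k.+1) (O k.+1) (f k.+1) (i k.+1),
      (forall q q', q \in S k -> q' \in delta A q (w k) -> f k.+1 q' <= f k q),
      rank (f k) = rank (f k.+1), tight (S k.+1) (f k.+1)
    & ((O k = set0 /\ i k.+1 = (i k + 2) %% (rank (f k.+1) + 1)
            /\ O k.+1 = [set q in S k.+1 | f k.+1 q == i k.+1])
          \/ (O k != set0 /\ i k.+1 = i k /\ O k.+1 = img A (O k) (w k) :&: [set q | f k.+1 q == i k]))].
  move=> mk; have := htr k; rewrite (eqC2 _ mk) (eqC2 _ (leq_trans mk (leqnSn _))) /=.
  by case=> h1 [_ [h2 [h3 [h4 h5]]]]; split.
have Q2k k : m0 < k -> Q2 A (S k) (O k) (f k) (i k).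
  case: k => // k; rewrite ltnS => mk; apply: hQ2; by case: (tr k mk).
pose g k := f k (r k).
have gmono k : m0 <= k -> g k.+1 <= g k.
  move=> mk; case: (tr k mk) => _ h _ _ _; apply: h; [exact: rin | exact: hr].
have [k1 [mk1 gc]] := ev_const gmono.
set v := g k1.
have rkc k : m0 <= k -> rank (f k) = rank (f m0).
  move=> mk; rewrite -(subnKC mk); elim: (k - m0) => [|d IH]; first by rewrite addn0.
  rewrite addnS -IH; case: (tr (m0 + d) (leq_addr _ _)) => _ _ -> _ _ //.
set rr := rank (f m0).
have [t [k1t Ft]] := hF k1.+1.
have Q2t := Q2k t (leq_ltn_trans mk1 k1t).
have vev : ~~ odd v.
  case: Q2t => [[[_ hev] _] _]; rewrite /v -(gc t (ltnW k1t)); exact: hev.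
have vle : v <= rr.
  rewrite /rr /v -(gc t (ltnW k1t)) -(rkc t (leq_trans mk1 (ltnW k1t))); exact: leq_bigmax.
have rro : odd rr.
  case: Q2t => [[_ [ho _]] _]; by rewrite /rr -(rkc t (leq_trans mk1 (ltnW k1t))).
have iev k : m0 < k -> ~~ odd (i k) by move=> h; case: (Q2k k h) => _ [_ [h1 _]].
have infE N : exists e, N <= e /\ O e = set0.
  have [e [Ne acc]] := hacc (maxn N m0); exists e; split; first exact: leq_trans (leq_maxl _ _) Ne.
  move: acc; rewrite (eqC2 e (leq_trans (leq_maxr _ _) Ne)) /=; by case.
have next k : k1 < k -> exists e, k <= e /\ O e = set0 /\ i e.+1 = (i k + 2) %% (rr + 1).
  move=> k1k.
  have ex : exists e, (k <= e) && (O e == set0).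
    have [e [ke he]] := infE k; exists e; by rewrite ke he eqxx.
  case: (ex_minnP ex) => e /andP[ke /eqP he] hmin.
  exists e; split => //; split => //.
  have mle : m0 <= e by apply: leq_trans (leq_trans mk1 (ltnW k1k)) ke.
  have ie : i e = i k.
    have : forall d, k + d <= e -> i (k + d) = i k.
      elim=> [|d IH] hd; first by rewrite addn0.
      have hd' : k + d < e by rewrite -addnS.
      have mkd : m0 <= k + d by apply: leq_trans (leq_trans mk1 (ltnW k1k)) (leq_addr _ _).
      have nE : O (k + d) != set0.
        apply/negP => /eqP h0; have := hmin (k + d); rewrite leq_addr h0 eqxx /= => /(_ isT).
        by rewrite leqNgt hd'.
      case: (tr _ mkd) => _ _ _ _ [[h0 _]|[_ [h1 _]]]; first by rewrite h0 eqxx in nE.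
      by rewrite addnS h1 IH // ltnW.
    by move/(_ (e - k)); rewrite subnKC //; apply.
  case: (tr e mle) => _ _ _ _ [[_ [h1 _]]|[h2 _]]; last by rewrite he eqxx in h2.
  by rewrite h1 ie /rr -(rkc _ (leq_trans mle (leqnSn _))).
have cyc c : forall k, k1 < k -> exists e, k <= e /\ O e = set0 /\ i e.+1 = (i k + (c.+1).*2) %% (rr + 1).
  elim: c => [|c IH] k k1k; first exact: next.
  have [e [ke [he ie]]] := IH k k1k.
  have [e' [ee' [he' ie']]] := next e.+1 (leq_ltn_trans (ltnW k1k) (leq_ltn_trans ke (ltnSn _))).
  exists e'; split; first exact: leq_trans ke (ltnW ee').
  split => //; rewrite ie' ie modnDml -addnA; congr (_ %% _); rewrite !doubleS; lia.
have [a ea] : exists a, i k1.+1 = a.*2.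
  exists (i k1.+1)./2; rewrite -[LHS]odd_double_half; by rewrite (negbTE (iev _ (leq_ltn_trans mk1 (ltnSn _)))).
have [b eb] : exists b, v = b.*2 by exists v./2; rewrite -[LHS]odd_double_half (negbTE vev).
have [h eh] : exists h, rr + 1 = h.*2.
  exists (rr + 1)./2; rewrite -[LHS]odd_double_half addn1 /= rro //.
have bh : b < h.
  rewrite -ltn_double -eb -eh addn1 ltnS //.
have [c hc] := cyc_arith a bh.
have [e [ke [he ie]]] := cyc c k1.+1 (ltnSn _).
rewrite ea eh hc -eb in ie.
have ge k : k1 <= k -> f k (r k) = v by move=> h0; exact: gc.
have inO j : e < j -> r j \in O j /\ i j = v.
  move=> ej; rewrite -(subnKC ej); elim: (j - e.+1) => [|d [IH1 IH2]].
    rewrite addn0; have me : m0 <= e by apply: leq_trans mk1 (leq_trans (leqnSn _) ke).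
    case: (tr e me) => _ _ _ _ [[_ [_ hO]]|[h2 _]]; last by rewrite he eqxx in h2.
    split => //; rewrite hO inE rin /= ge ?ie // (leq_trans (leqnSn _) (leq_trans ke (leqnSn _))) //.
  have med : m0 <= e.+1 + d by apply: leq_trans mk1 (leq_trans (leqnSn _) (leq_trans ke (leq_trans (leqnSn _) (leq_addr _ _)))).
  have nE : O (e.+1 + d) != set0 by apply/set0Pn; exists (r (e.+1 + d)).
  case: (tr _ med) => _ _ _ _ [[h0 _]|[_ [h1 hO]]]; first by rewrite h0 eqxx in nE.
  rewrite addnS h1 IH2; split => //.
  rewrite hO inE; apply/andP; split; first exact: img_mem IH1 (hr _).
  rewrite inE IH2 ge ?eqxx //.
  move: ke; clear; lia.
have [t2 [et2 Et2]] := infE e.+1.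
have := (inO t2 et2).1; by rewrite Et2 inE.
Qed.
End Sound.

Fixpoint pathf (pi0 : nat -> Q) (e : nat) (nx : Q -> nat -> Q) t : Q :=
  match t with
  | 0 => pi0 0
  | t'.+1 => if t'.+1 <= e then pi0 t'.+1 else nx (pathf pi0 e nx t') t'
  end.

Lemma pathf_le pi0 e nx t : t <= e -> pathf pi0 e nx t = pi0 t.
Proof. by case: t => //= t ->. Qed.

Lemma pathf_S pi0 e nx t : e <= t -> pathf pi0 e nx t.+1 = nx (pathf pi0 e nx t) t.
Proof. by move=> h /=; rewrite leqNgt ltnS h. Qed.

Definition nopath P q k N := ~ exists pi, fpath P q k (k + N) pi.

Lemma konig P q k : ~ infp P q k -> exists N, nopath P q k N.
Proof.
move=> hni; apply: NNPP => H.
pose good u t := forall N, exists pi, fpath P u t (t + N) pi.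
have gq : good q k.
  move=> N; apply: NNPP => h; apply: H; exists N; exact: h.
have step : forall u t, good u t -> exists u', edge t u u' /\ good u' t.+1.
  move=> u t gu; apply: NNPP => H2.
  have hN : forall u', exists N, edge t u u' -> ~ exists pi, fpath P u' t.+1 (t.+1 + N) pi.
    move=> u'; case: (classic (edge t u u')) => he; last by exists 0.
    have : ~ good u' t.+1 by move=> g; apply: H2; exists u'.
    move=> /not_all_ex_not [N hN]; by exists N.
  have [Nf hNf] := fin_all_exists hN.
  have [pi fp] := gu (\max_u' Nf u').+1.
  have tl : t <= t.+1 <= t + (\max_u' Nf u').+1 by rewrite leqnSn addnS ltnS leq_addr.
  have fp' := fpath_tail fp tl.
  apply: (hNf (pi t.+1)).
    case: fp => _ p0 _ HE; rewrite -p0 /edge; have := HE t; rewrite leqnn addnS ltnS leq_addr /= p0; by apply.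
  exists pi; apply: fpath_trunc fp' _; rewrite leq_addr /= addSn addnS ltnS leq_add2l; exact: leq_bigmax.
have [nx hnx] := choice_fun (fun (c : Q * nat) u' => edge c.2 c.1 u' /\ good u' c.2.+1) q.
pose pf := pathf (fun _ => q) k (fun u t => nx (u, t)).
have inv t : k <= t -> good (pf t) t.
  move=> kt; rewrite -(subnKC kt); elim: (t - k) => [|d IH]; first by rewrite addn0 /pf pathf_le.
  rewrite addnS /pf pathf_S ?leq_addr //; exact: (hnx (_, _) (step _ _ IH)).2.
apply: hni; exists pf; split; first by rewrite /pf pathf_le.
move=> t kt; split.
  have [pi [_ p0 HP _]] := inv t kt 0; rewrite -p0; apply: HP; by rewrite addn0 leqnn.
rewrite /pf pathf_S //; exact: (hnx (_, _) (step _ _ (inv t kt))).1.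
Qed.

Lemma nopath_mono P q k N N' : nopath P q k N -> N <= N' -> nopath P q k N'.
Proof.
move=> h NN [pi fp]; apply: h; exists pi; apply: fpath_trunc fp _; by rewrite leq_addr leq_add2l.
Qed.

Lemma nopath_pred P p y k N : P p k -> edge k p y -> nopath P p k N.+1 -> nopath P y k.+1 N.
Proof.
move=> hp he h [pi fp]; apply: h; exists (prep p k pi).
have e1 : pi k.+1 = y by case: fp.
rewrite addnS -addSn; apply: prep_fpath => //; by rewrite e1.
Qed.

Lemma ext_path P q k e pi : complete A -> fpath P q k e pi ->
  exists pi', pi' k = q /\ (forall t, k <= t <= e -> pi' t = pi t) /\
    (forall t, k <= t -> edge t (pi' t) (pi' t.+1)).
Proof.
move=> hc fp.
pose nx u t := odflt u [pick u' in delta A u (w t)].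
have hnx u t : edge t u (nx u t).
  rewrite /edge /nx; case: pickP => [x hx //|h].
  by have := hc u (w t); rewrite (_ : delta A u (w t) = set0) ?eqxx //; apply/setP => x; rewrite inE h.
exists (pathf pi e nx); case: fp => ke pk HP HE; split; first by rewrite pathf_le.
split; first by move=> t /andP[_ te]; rewrite pathf_le.
move=> t kt; case: (ltnP t e) => te.
  rewrite !pathf_le // ?(ltnW te) //; apply: HE; by rewrite kt te.
rewrite pathf_S //; exact: hnx.
Qed.

Lemma nopath_sim j x y k N : complete A -> sim_de A x y -> R y k ->
  nopath (G j) y k N -> nopath (G j) x k N.
Proof.
move=> hc [sg [hs hw]] hR h [pi fp].
have [pi' [p0 [pe he]]] := ext_path hc fp.
apply: h; exists (adup sg y k pi'); case: fp => ke _ HP _; split => //.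
- exact: adup_le.
- move=> t /andP[kt te].
  have [h1 _] := dup_props hs hw p0 he kt.
  apply: (G_sim hs h1 (dup_R hs hw p0 he hR kt)); rewrite pe; last by rewrite kt te.
  apply: HP; by rewrite kt te.
- move=> t /andP[kt _]; exact: (dup_props hs hw p0 he kt).2.
Qed.

Lemma fin_bound (P : Q -> nat -> Prop) : (forall x, exists N, P x N) ->
  (forall x N N', P x N -> N <= N' -> P x N') -> exists N, forall x, P x N.
Proof.
move=> h hm; have [Nf hNf] := fin_all_exists h.
exists (\max_x Nf x) => x; apply: hm (hNf x) _; exact: leq_bigmax.
Qed.

Section Compl.
Variables (Q2x : {set Q} -> {set Q} -> (Q -> nat) -> nat -> Prop)
  (post : {set Q} -> {set Q} -> Prop) (postf : {set Q} -> {set Q}).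
Hypothesis Hc : complete A.
Hypothesis hQ2x : forall S O f i, Q2 A S O f i ->
  (forall p q, p \in S -> q \in S -> sim_de A p q -> f p <= f q) -> Q2x S O f i.
Hypothesis hpost : forall T, post T (postf T).
Hypothesis hsub : forall T : {set Q}, T \subset postf T.
Hypothesis hsim : forall (T : {set Q}) x, x \in postf T -> exists2 y, y \in T & sim_de A x y.

Fixpoint Sq k := if k is k'.+1 then postf (img A (Sq k') (w k')) else init A.
Definition fr k q := if q \in Sq k then rk q k else 0.
Definition Mr k := rank (fr k).

Fixpoint Oi k0 m t : {set Q} * nat :=
  match t with
  | 0 => (set0, 0)
  | t'.+1 => if (Oi k0 m t').1 == set0 then
        ([set q in Sq (k0 + t').+1 | fr (k0 + t').+1 q == ((Oi k0 m t').2 + 2) %% (m + 1)],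
         ((Oi k0 m t').2 + 2) %% (m + 1))
      else (img A (Oi k0 m t').1 (w (k0 + t')) :&: [set q | fr (k0 + t').+1 q == (Oi k0 m t').2],
            (Oi k0 m t').2)
  end.

Lemma OiS k0 m t : Oi k0 m t.+1 = if (Oi k0 m t).1 == set0 then
        ([set q in Sq (k0 + t).+1 | fr (k0 + t).+1 q == ((Oi k0 m t).2 + 2) %% (m + 1)],
         ((Oi k0 m t).2 + 2) %% (m + 1))
      else (img A (Oi k0 m t).1 (w (k0 + t)) :&: [set q | fr (k0 + t).+1 q == (Oi k0 m t).2],
            (Oi k0 m t).2).
Proof. by []. Qed.

Lemma Ssucc k p q : p \in Sq k -> edge k p q -> q \in Sq k.+1.
Proof. move=> hp he; apply: (subsetP (hsub _)); exact: img_mem hp he. Qed.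

Lemma SR k q : ~ lang A w -> q \in Sq k -> R q k.
Proof.
move=> nL; elim: k q => [|k IH] q /=.
  move=> qi [pi [[p0 hp] hF]]; apply: nL; exists pi; split; first by rewrite p0.
  split => // i; exact: (hp i (leq0n i)).2.
move=> /hsim [y /bigcupP [p pS py] sxy].
apply: (R_sim sxy); apply: R_succ py; exact: IH.
Qed.

Lemma Sq_fpath P x k e pi : x \in Sq k -> fpath P x k e pi -> forall t, k <= t <= e -> pi t \in Sq t.
Proof.
move=> hx [ke pk _ HE] t /andP[kt te]; move: te; rewrite -(subnKC kt).
elim: (t - k) => [|d IH]; first by rewrite addn0 pk.
move=> h; have h' : k + d <= e by apply: leq_trans h; rewrite leq_add2l.
have h'' : k <= k + d < e by rewrite leq_addr -addnS h.
rewrite addnS; exact: (Ssucc (IH h') (HE _ h'')).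
Qed.

Lemma Sq_ipath P x k pi : x \in Sq k -> ipath P x k pi -> forall t, k <= t -> pi t \in Sq t.
Proof.
move=> hx hp t kt; apply: (Sq_fpath hx (ipath_fpath hp kt)); by rewrite kt leqnn.
Qed.

Lemma compl : ~ lang A w -> clang A Q2x post w.
Proof.
move=> nL; have SR' := SR nL.
case: (classic (exists k, Sq k = set0)) => [[k0 h0]|hne].
  have empty j : k0 <= j -> Sq j = set0.
    move=> kj; rewrite -(subnKC kj); elim: (j - k0) => [|d IH]; first by rewrite addn0.
    rewrite addnS /=; apply/setP => x; rewrite inE; apply/negP => /hsim [y /bigcupP [p]].
    by rewrite IH inE.
  exists (fun j => C1 (Sq j)); split => //; split; first by move=> j; exact: hpost.
  move=> N; exists (maxn N k0); split; first exact: leq_maxl.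
  rewrite /cacc; apply: empty; exact: leq_maxr.
have ne k : exists x, x \in Sq k.
  apply: NNPP => h; apply: hne; exists k; apply/setP => x; rewrite inE; apply/negP => hx; apply: h; by exists x.
have frS k q : q \in Sq k -> fr k q = rk q k by rewrite /fr => ->.
have Mle k q : fr k q <= Mr k by exact: leq_bigmax.
have Mmono k : Mr k.+1 <= Mr k.
  apply/bigmax_leqP => q _; rewrite /fr; case: ifP => // hq.
  have [y yi sxy] := hsim hq.
  have yS : y \in Sq k.+1 by apply: (subsetP (hsub _)).
  have Ry := SR' _ _ yS.
  case/bigcupP: yi => p pS py.
  apply: leq_trans (rk_sim sxy Ry) _; apply: leq_trans (rk_edge (SR' _ _ pS) py) _.
  rewrite -frS //.
have [k1 [_ Mc]] := ev_const (m := 0) (fun k _ => Mmono k).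
set m := Mr k1.
have attain k : exists x, x \in Sq k /\ rk x k = Mr k.
  have [x hx] := ne k.
  have c0 : 0 < #|Q| by apply/card_gt0P; exists x.
  have [q0 e] := eq_bigmax (fr k) c0.
  case: (boolP (q0 \in Sq k)) => hq0.
    exists q0; split => //; rewrite /Mr /rank e frS //.
  exists x; split => //; apply/eqP; rewrite eqn_leq -{1}(frS _ _ hx) Mle /=.
  by rewrite /Mr /rank e /fr (negbTE hq0).
have modd : odd m.
  case: (boolP (odd m)) => // hev; exfalso.
  have hni x : x \in Sq k1 -> rk x k1 = m -> ~ infp (G m) x k1.
    move=> hx hr hi.
    have : G m.+1 x k1 by split; [apply/(rkP _ (SR' _ _ hx)); rewrite hr | rewrite /= (negbTE hev)].
    by move/(rkP _ (SR' _ _ hx)); rewrite hr ltnn.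
  have hex : forall x, exists N, x \in Sq k1 -> rk x k1 = m -> nopath (G m) x k1 N.
    move=> x; case: (classic (x \in Sq k1 /\ rk x k1 = m)) => [[hx hr]|hn].
      have [N hN] := konig (hni x hx hr); by exists N.
    by exists 0 => hx hr; exfalso; apply: hn.
  have [Nb hN] := fin_bound hex (fun x N N' h NN hx hr => nopath_mono (h hx hr) NN).
  have ind j : j <= Nb -> forall x, x \in Sq (k1 + j) -> rk x (k1 + j) = m ->
      nopath (G m) x (k1 + j) (Nb - j).
    elim: j => [|j IH] jN x; first by rewrite !addn0 subn0; exact: hN.
    rewrite addnS => hx hr.
    have [y yi sxy] := hsim hx.
    have yS : y \in Sq (k1 + j).+1 by apply: (subsetP (hsub _)).
    have Ry := SR' _ _ yS.
    case/bigcupP: (yi) => p pS py.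
    have Rp := SR' _ _ pS.
    have h1 := rk_sim sxy Ry; have h2 := rk_edge Rp py.
    have h3 : rk p (k1 + j) <= m.
      rewrite -frS // /m -(Mc (k1 + j) (leq_addr _ _)); exact: Mle.
    have rp : rk p (k1 + j) = m.
      apply/eqP; rewrite eqn_leq h3 /= -{1}hr; exact: leq_trans h1 h2.
    have np := IH (ltnW jN) p pS rp.
    rewrite (_ : Nb - j = (Nb - j.+1).+1) in np; last by rewrite subnSK.
    have Gp : G m p (k1 + j) by apply/(rkP _ Rp); rewrite rp.
    exact: nopath_sim Hc sxy Ry (nopath_pred Gp py np).
  have [x [hx hr]] := attain (k1 + Nb).
  rewrite Mc ?leq_addr // in hr.
  have := ind Nb (leqnn Nb) x hx hr; rewrite subnn; apply.
  exists (fun _ => x); rewrite addn0; apply: fpath0; apply/(rkP _ (SR' _ _ hx)); by rewrite hr.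
have Mk k : k1 <= k -> Mr k = m by move=> h; exact: Mc.
have tightj o : odd o -> o < m -> exists l, forall k, l <= k -> exists x, x \in Sq k /\ rk x k = o.
  move=> oo om; set i := o./2.
  have eo : o = (i.*2).+1 by rewrite -{1}(odd_double_half o) oo.
  have [x [hx hr]] := attain k1; rewrite -/m in hr.
  have Gx : G (i.*2).+1 x k1 by apply/(rkP _ (SR' _ _ hx)); rewrite hr -eo ltnW.
  have [e [pi [fp nG]]] := Ffree Gx.
  have ke : k1 <= e by case: fp.
  have uS : pi e \in Sq e by apply: (Sq_fpath hx fp); rewrite ke leqnn.
  have Gu : G (i.*2).+1 (pi e) e by case: fp => _ _ HP _; apply: HP; rewrite ke leqnn.
  have /G_even_unfold [_ [p2 hp2]] := Gu.
  have hp2' := G_tail_ipath (negbT (odd_double i)) hp2.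
  exists e => k ek; exists (p2 k); split; first exact: (Sq_ipath uS hp2 ek).
  have Rk := SR' _ _ (Sq_ipath uS hp2 ek).
  apply/eqP; rewrite eqn_leq; apply/andP; split; last first.
    apply/(rkP _ Rk); rewrite eo; exact: (hp2'.2 k ek).1.
  rewrite leqNgt; apply/negP => h; apply: nG.
  have : G (i.*2).+2 (p2 k) k by apply/(rkP _ Rk); rewrite -eo.
  move=> /G_odd_unfold [_ [e3 [p3 [fp3 F3]]]].
  apply/G_odd_unfold; split => //.
  exists e3, (catp k p2 p3); split; last first.
    have [k'e3 p3k _ _] := fp3; rewrite /catp; case: (leqP e3 k) => h0 //.
    have ee : e3 = k by apply/eqP; rewrite eqn_leq h0 k'e3.
    by rewrite ee -p3k -ee.
  apply: fpath_cat => //; exact: ipath_fpath hp2' ek.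
have [L hL] : exists L, forall o, odd o -> o < m -> forall k, L <= k -> exists x, x \in Sq k /\ rk x k = o.
  suff : forall b, exists L, forall o, o < b -> odd o -> o < m -> forall k, L <= k ->
      exists x, x \in Sq k /\ rk x k = o.
    move=> /(_ m) [L hL]; exists L => o oo om; exact: hL.
  elim=> [|b [L1 IH]]; first by exists 0.
  case: (boolP (odd b && (b < m))) => [/andP[ob bm]|hb].
    have [l hl] := tightj b ob bm.
    exists (maxn L1 l) => o; rewrite ltnS leq_eqVlt => /orP[/eqP ->|ob'] oo om k hk.
      apply: hl; exact: leq_trans (leq_maxr _ _) hk.
    apply: IH => //; exact: leq_trans (leq_maxl _ _) hk.
  exists L1 => o; rewrite ltnS leq_eqVlt => /orP[/eqP eob|ob'] oo om k hk.
    by rewrite -eob oo om in hb.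
  exact: IH.
set k0 := maxn (maxn k1 L) 1.
have k1k0 : k1 <= k0 by rewrite leq_max leq_maxl.
have Lk0 : L <= k0 by rewrite leq_max leq_max leqnn orbT.
have k0p : 0 < k0 by rewrite leq_max leqnn orbT.
pose O k := (Oi k0 m (k - k0)).1.
pose I k := (Oi k0 m (k - k0)).2.
have O0 : O k0 = set0 by rewrite /O subnn.
have I0 : I k0 = 0 by rewrite /I subnn.
have Ostep k : k0 <= k ->
   (O k = set0 /\ I k.+1 = (I k + 2) %% (m + 1) /\ O k.+1 = [set q in Sq k.+1 | fr k.+1 q == I k.+1])
   \/ (O k != set0 /\ I k.+1 = I k /\ O k.+1 = img A (O k) (w k) :&: [set q | fr k.+1 q == I k]).
  move=> kk; rewrite /O /I subSn // OiS subnKC //.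
  case: eqP => h; [left | right]; split => //; by apply/eqP.
have Inv k : k0 <= k -> [/\ ~~ odd (I k), I k < m.+1, O k \subset Sq k & forall q, q \in O k -> fr k q = I k].
  move=> kk; rewrite -(subnKC kk); elim: (k - k0) => [|d [IH1 IH2 IH3 IH4]].
    rewrite addn0 O0 I0 sub0set; split => // q; by rewrite inE.
  rewrite addnS; case: (Ostep _ (leq_addr d k0)) => [[h1 [h2 h3]]|[h1 [h2 h3]]].
  - rewrite h3 h2; split.
    + have hm1 : odd (m + 1) = false by rewrite addn1 /= modd.
      by rewrite (odd_mod _ hm1) addn2 /= negbK.
    + by rewrite -[m.+1]addn1 ltn_pmod // addn1.
    + by apply/subsetP => q; rewrite inE => /andP[].
    + by move=> q; rewrite inE => /andP[_ /eqP].
  - rewrite h3 h2; split => //.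
    + apply/subsetP => q; rewrite inE => /andP[qi _]; apply: (subsetP (hsub _)).
      move: qi; apply/subsetP; exact: img_sub.
    + by move=> q; rewrite !inE => /andP[_ /eqP].
have Mle2 k : Mr k <= #|Q|.*2.
  apply/bigmax_leqP => q _; rewrite /fr; case: ifP => // _; exact: rk_le.
have tightk k : k0 <= k -> forall S : {set Q}, Sq k \subset S -> tight S (fr k).
  move=> kk S hS; have Mkm := Mk k (leq_trans k1k0 kk).
  have Mkm' : rank (fr k) = m := Mkm.
  split; first by rewrite Mkm'.
  split.
    move=> o oo; rewrite Mkm' leq_eqVlt => /orP[/eqP ->|om].
      have [x [hx hr]] := attain k; exists x; first exact: (subsetP hS).
      by rewrite frS // hr Mkm.
    have [x [hx hr]] := hL o oo om k (leq_trans Lk0 kk).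
    exists x; [exact: (subsetP hS) | by rewrite frS].
  move=> q hq; rewrite /fr; case: ifP => // h; by rewrite (subsetP hS q h) in hq.
have Q2ok k : k0 <= k -> Q2x (Sq k) (O k) (fr k) (I k).
  move=> kk; have [i1 i2 i3 i4] := Inv k kk.
  apply: hQ2x; last first.
    move=> p q pS qS spq; rewrite !frS //; exact: rk_sim spq (SR' _ _ qS).
  split; first split.
  - split.
      move=> q; rewrite /nQ mul2n /fr; case: ifP => // _; exact: rk_le.
    move=> q qF; rewrite /fr; case: ifP => // qS; exact: rk_F (SR' _ _ qS) qF.
  - apply: tightk => //; exact: subsetT.
  split; first exact: tightk.
  split => //; split; last by split.
  have mle : m <= #|Q|.*2 by rewrite /m; exact: Mle2.
  rewrite /nQ mul2n.
  have eI : I k = ((I k)./2).*2 by rewrite -{1}(odd_double_half (I k)) (negbTE i1).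
  have em : m = (m./2).*2.+1 by rewrite -{1}(odd_double_half m) modd.
  move: i2 mle; rewrite eI em; move: ((I k)./2) (m./2) => a b; rewrite -!mul2n; lia.
pose rho k := if k < k0 then C1 (Sq k) else C2 (Sq k) (O k) (fr k) (I k).
exists rho; split; first by rewrite /rho k0p.
split.
  move=> k; rewrite /rho; case: (ltnP k.+1 k0) => h1.
    rewrite (ltn_trans (ltnSn k) h1) /=; exact: hpost.
  case: (ltnP k k0) => h2 /=.
    have ek : k.+1 = k0 by apply/eqP; rewrite eqn_leq h1 h2.
    split; first exact: (Q2ok k.+1 h1).
    split; first exact: hpost.
    split; first by rewrite ek O0.
    split; first by rewrite ek I0.
    exact: (tightk k.+1 h1 _ (subxx _)).
  split; first exact: (Q2ok k.+1 h1).
  split; first exact: hpost.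
  split.
    move=> q q' qS hq'; rewrite !frS //; [exact: rk_edge (SR' _ _ qS) hq' | exact: Ssucc qS hq'].
  have e1 : rank (fr k) = m := Mk k (leq_trans k1k0 h2).
  have e2 : rank (fr k.+1) = m := Mk k.+1 (leq_trans k1k0 h1).
  split; first by rewrite e1 e2.
  split; first exact: (tightk k.+1 h1 _ (subxx _)).
  by rewrite e2; exact: Ostep.
move=> N; apply: NNPP => hN.
set N' := maxn N k0.
have k0N : k0 <= N' := leq_maxr _ _.
have nE k : N' <= k -> O k != set0.
  move=> h; apply/negP => /eqP hO; apply: hN; exists k; split; first exact: leq_trans (leq_maxl _ _) h.
  rewrite /rho ltnNge (leq_trans k0N h) /=; split => //; exact: Q2ok (leq_trans k0N h).
have Ic d : I (N' + d) = I N'.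
  elim: d => [|d IH]; first by rewrite addn0.
  rewrite addnS; case: (Ostep (N' + d) (leq_trans k0N (leq_addr _ _))) => [[h _]|[_ [h _]]].
    by move: (nE _ (leq_addr d N')); rewrite h eqxx.
  by rewrite h.
set iv := I N'.
have OS k x : N' <= k -> x \in O k -> x \in Sq k.
  move=> h hx; have [_ _ i3 _] := Inv k (leq_trans k0N h); exact: (subsetP i3).
have rkO k x : N' <= k -> x \in O k -> rk x k = iv.
  move=> h hx; have [_ _ _ i4] := Inv k (leq_trans k0N h).
  rewrite -frS ?(OS k x h hx) // i4 // -(subnKC h) Ic //.
have ivev : ~~ odd iv by have [] := Inv N' k0N.
have GO k x : N' <= k -> x \in O k -> G iv x k.
  move=> h hx; apply/(rkP _ (SR' _ _ (OS k x h hx))); by rewrite rkO.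
have hni k x : N' <= k -> x \in O k -> ~ infp (G iv) x k.
  move=> h hx hi; have : G iv.+1 x k by split; [exact: GO | rewrite /= (negbTE ivev)].
  by move/(rkP _ (SR' _ _ (OS k x h hx))); rewrite rkO // ltnn.
have hex : forall x, exists Nn, x \in O N' -> nopath (G iv) x N' Nn.
  move=> x; case: (boolP (x \in O N')) => hx; last by exists 0.
  have [Nn hNn] := konig (hni N' x (leqnn _) hx); by exists Nn.
have [Nb hNb] := fin_bound hex (fun x n n' h nn hx => nopath_mono (h hx) nn).
have ind j : j <= Nb -> forall x, x \in O (N' + j) -> nopath (G iv) x (N' + j) (Nb - j).
  elim: j => [|j IH] jN x; first by rewrite !addn0 subn0; exact: hNb.
  rewrite addnS => hx.
  case: (Ostep (N' + j) (leq_trans k0N (leq_addr _ _))) => [[h _]|[_ [_ h]]].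
    by move: (nE _ (leq_addr j N')); rewrite h eqxx.
  move: hx; rewrite h inE => /andP[/bigcupP [p pO py] _].
  have np := IH (ltnW jN) p pO.
  rewrite (_ : Nb - j = (Nb - j.+1).+1) in np; last by rewrite subnSK.
  exact: nopath_pred (GO _ _ (leq_addr _ _) pO) py np.
have [x hx] := set0Pn _ (nE (N' + Nb) (leq_addr _ _)).
have := ind Nb (leqnn Nb) x hx; rewrite subnn; apply.
exists (fun _ => x); rewrite addn0; apply: fpath0; exact: GO (leq_addr _ _) hx.
Qed.
End Compl.
End Run.

Definition strf (Sigma Q : finType) (A : buchi Sigma Q) (T : {set Q}) : {set Q} :=
  [set q | pb (exists2 s, s \in T & sim_de A q s)].

Lemma iff_notL (Sigma Q : finType) (A : buchi Sigma Q) (hc : complete A) w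
  (Q2x : {set Q} -> {set Q} -> (Q -> nat) -> nat -> Prop) (post : {set Q} -> {set Q} -> Prop)
  (postf : {set Q} -> {set Q}) :
  (forall S O f i, Q2x S O f i -> Q2 A S O f i) ->
  (forall T S', post T S' -> T \subset S') ->
  (forall S O f i, Q2 A S O f i ->
     (forall p q, p \in S -> q \in S -> sim_de A p q -> f p <= f q) -> Q2x S O f i) ->
  (forall T, post T (postf T)) ->
  (forall T : {set Q}, T \subset postf T) ->
  (forall (T : {set Q}) x, x \in postf T -> exists2 y, y \in T & sim_de A x y) ->
  (clang A Q2x post w <-> ~ lang A w).
Proof.
move=> h1 h2 h3 h4 h5 h6; split.
  exact: (sound (w := w) h1 h2).
exact: (compl hc h3 h4 h5 h6).
Qed.

Lemma BS_iff (Sigma Q : finType) (A : buchi Sigma Q) (hc : complete A) w :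
  lang_BS A w <-> ~ lang A w.
Proof.
apply: (@iff_notL _ _ A hc w _ _ id) => //.
- by move=> T S' ->.
- move=> T x hx; exists x => //; exact: sim_refl.
Qed.

Lemma str_hyps (Sigma Q : finType) (A : buchi Sigma Q) (hc : complete A) :
  [/\ (forall T S', post_str A T S' -> T \subset S'),
      (forall T, post_str A T (strf A T)),
      (forall T : {set Q}, T \subset strf A T)
    & (forall (T : {set Q}) x, x \in strf A T -> exists2 y, y \in T & sim_de A x y)].
Proof.
split.
- move=> T S' h; apply/subsetP => q qT; apply/h; exists q => //; exact: sim_refl.
- move=> T q; rewrite inE; split; by move/pbP.
- move=> T; apply/subsetP => q qT; rewrite inE; apply/pbP; exists q => //; exact: sim_refl.
- by move=> T x; rewrite inE => /pbP.
Qed.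

Lemma ceil_ge x : x <= ceil_even x.
Proof. rewrite /ceil_even; by case: ifP. Qed.

Theorem lemma9 (Sigma Q : finType) (A : buchi Sigma Q) :
  0 < #|Sigma| -> complete A ->
  (forall w, lang_sat_di A w <-> lang_BS A w) /\
  (forall w, lang_sat_de A w <-> lang_BS A w) /\
  (forall w, lang_sat_dide A w <-> lang_BS A w).
Proof.
move=> _ hc; have [s1 s2 s3 s4] := str_hyps hc.
have pdi S O f i : Q2 A S O f i -> (forall p q, p \in S -> q \in S -> sim_de A p q -> f p <= f q) ->
    Q2_di A S O f i.
  move=> hq hp; split => // -[p [q [pS qS sd lt]]].
  by move: (hp p q pS qS (sim_di_de sd)); rewrite leqNgt lt.
have pde S O f i : Q2 A S O f i -> (forall p q, p \in S -> q \in S -> sim_de A p q -> f p <= f q) ->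
    Q2_de A S O f i.
  move=> hq hp; split => // -[p [q [pS qS sd lt]]].
  by move: (leq_trans (hp p q pS qS sd) (ceil_ge _)); rewrite leqNgt lt.
split; last split.
- move=> w; rewrite BS_iff //; apply: (@iff_notL _ _ A hc w _ _ (strf A)) => //.
  by move=> S O f i [].
- move=> w; rewrite BS_iff //; apply: (@iff_notL _ _ A hc w _ _ (strf A)) => //.
  by move=> S O f i [].
- move=> w; rewrite BS_iff //; apply: (@iff_notL _ _ A hc w _ _ (strf A)) => //.
    by move=> S O f i [[]].
  move=> S O f i hq hp; split; [exact: pdi | exact: pde].
Qed.
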